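(* For every integer $n\ge0$ with $n\neq1$, $$B_n=\frac{1}{2-2^n}\sum_{K=0}^{\lfloor n/2\rfloor}(-1)^K\sum_{\substack{1\le q_1,\dots,q_K\le\lfloor n/2\rfloor\\ 2q_1+\cdots+2q_K=n}}\frac{1}{(2q_1+1)\cdots(2q_K+1)}\,\frac{n!}{(2q_1)!\cdots(2q_K)!}.$$
   Context: The Bernoulli numbers $B_n$ are defined by $\sum_{n\ge0}B_nz^n/n!=z/(e^z-1)$. The inner sum is over ordered $K$-tuples (the $K=0$ term is the empty tuple, which contributes $1$ exactly when $n=0$). *)

(* Defs.v *)
From mathcomp Require Import all_boot all_order all_algebra.
Set Implicit Arguments. Unset Strict Implicit. Unset Printing Implicit Defensive.
Import Order.TTheory GRing.Theory Num.Theory.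
Local Open Scope ring_scope.

(* B : nat -> rat is the sequence of Bernoulli numbers, i.e.
   \sum_n B_n z^n / n! = z / (e^z - 1) as formal power series.
   Equivalently (multiplying out), (\sum_n B_n z^n/n!) * ((e^z - 1)/z) = 1,
   where (e^z - 1)/z = \sum_m z^m/(m+1)!; comparing coefficients of z^n: *)
Definition bernoulli_gf (B : nat -> rat) : Prop :=
  forall n : nat,
    \sum_(k < n.+1) B k / (k`!)%:R / ((n - k).+1`!)%:R = (n == 0%N)%:R.

(* Main.v *)
Require Import Defs.
From mathcomp Require Import all_boot all_order all_algebra.
From mathcomp Require Import ring lra zify.
Import Order.TTheory GRing.Theory Num.Theory.
Local Open Scope ring_scope.

Definition Z (N : nat) (p : {poly rat}) := forall i, (i < N)%N -> p`_i = 0.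

Lemma ZD N p q : Z N p -> Z N q -> Z N (p + q).
Proof. by move=> hp hq i hi; rewrite coefD hp // hq // addr0. Qed.
Lemma ZN N p : Z N p -> Z N (- p).
Proof. by move=> hp i hi; rewrite coefN hp // oppr0. Qed.
Lemma ZB N p q : Z N p -> Z N q -> Z N (p - q).
Proof. by move=> hp hq; apply: ZD => //; apply: ZN. Qed.
Lemma ZM N q p : Z N p -> Z N (q * p).
Proof.
move=> hp i hi; rewrite coefM big1 // => j _; rewrite hp ?mulr0 //.
exact: leq_ltn_trans (leq_subr _ _) hi.
Qed.
Lemma ZMr N q p : Z N p -> Z N (p * q).
Proof. by rewrite mulrC; apply: ZM. Qed.
Lemma Z_le N M p : (M <= N)%N -> Z N p -> Z M p.
Proof. by move=> hMN hp i hi; apply: hp; exact: leq_trans hi hMN. Qed.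

Definition pol N (a : nat -> rat) : {poly rat} := \poly_(i < N) a i.

Lemma coef_pol N a i : (i < N)%N -> (pol N a)`_i = a i.
Proof. by move=> hi; rewrite coef_poly hi. Qed.

Lemma coef_polM N a b i : (i < N)%N ->
  (pol N a * pol N b)`_i = \sum_(j < i.+1) a j * b (i - j)%N.
Proof.
move=> hi; rewrite coefM; apply: eq_bigr => j _.
have hj0 := ltn_ord j.
have hj : (j < N)%N by lia.
have hij : (i - j < N)%N by lia.
by rewrite (coef_pol _ _ _ hj) (coef_pol _ _ _ hij).
Qed.

Lemma conv_scale (c : rat) (x y : nat -> rat) i :
  \sum_(j < i.+1) (c ^+ j * x j) * (c ^+ (i - j)%N * y (i - j)%N)
  = c ^+ i * \sum_(j < i.+1) x j * y (i - j)%N.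
Proof.
rewrite mulr_sumr; apply: eq_bigr => j _.
rewrite mulrACA -exprD subnKC //; exact: ltnSE (ltn_ord j).
Qed.

Lemma coef_nat (k i : nat) : (k%:R : {poly rat})`_i = k%:R * (i == 0%N)%:R.
Proof. by rewrite coefMn coef1 mulr_natl. Qed.

Lemma coef_natM (k i : nat) (p : {poly rat}) : (k%:R * p)`_i = k%:R * p`_i.
Proof. by rewrite mulr_natl coefMn mulr_natl. Qed.

Lemma fact_neq0 k : (k`!%:R : rat) != 0.
Proof. by rewrite pnatr_eq0 -lt0n fact_gt0. Qed.

Section Part2.
Variable B : nat -> rat.
Hypothesis HB : bernoulli_gf B.
Variable N : nat.

Definition Bp := pol N (fun i => B i / (i`!)%:R).
Definition B2 := pol N (fun i => 2 ^+ i * (B i / (i`!)%:R)).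
Definition Ep := pol N (fun i => ((i.+1)`!%:R)^-1).
Definition E2 := pol N (fun i => 2 ^+ i.+1 * ((i.+1)`!%:R)^-1).
Definition Y (c : rat) := pol N (fun i => c ^+ i / (i`!)%:R).
Definition Sp := pol N (fun i => (~~ odd i)%:R / ((i.+1)`!)%:R).

Lemma r1 : Z N (Bp * Ep - 1).
Proof.
move=> i hi; rewrite coefB coef_polM // coef1.
by have := HB i; rewrite /= => ->; rewrite subrr.
Qed.

Lemma r2 : Z N (B2 * E2 - 2).
Proof.
move=> i hi; rewrite coefB coef_polM // coef_nat.
rewrite (eq_bigr (fun j : 'I_i.+1 => 2 * ((2 ^+ j * (B j / (j`!)%:R)) *
   (2 ^+ (i - j)%N * ((i - j).+1`!%:R)^-1)))); last first.
  by move=> j _; rewrite exprS; ring.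
rewrite -mulr_sumr (conv_scale 2 (fun j => B j / (j`!)%:R) (fun k => ((k.+1)`!%:R)^-1)).
have := HB i; rewrite /= => ->.
by case: i hi => [|i] hi; rewrite /= ?expr0 ?mulr0 ?mulr1 ?subrr.
Qed.

Lemma r3 : Z N ('X * Ep - (Y 1 - 1)).
Proof.
move=> i hi; rewrite coefB coefXM coefB coef1.
case: i hi => [|i] hi /=; first by rewrite coef_pol // expr0 fact0 invr1 mulr1 subrr subr0.
by rewrite !coef_pol ?expr1n ?mul1r ?subr0 ?subrr //; exact: ltnW.
Qed.

Lemma r4 : Z N ('X * E2 - (Y 2 - 1)).
Proof.
move=> i hi; rewrite coefB coefXM coefB coef1.
case: i hi => [|i] hi /=; first by rewrite coef_pol // expr0 fact0 invr1 mulr1 subrr subr0.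
by rewrite !coef_pol ?subr0 ?subrr //; exact: ltnW.
Qed.

Lemma r5 : Z N (2 * ('X * Sp) - (Y 1 - Y (-1))).
Proof.
move=> i hi; rewrite coefB coef_natM coefXM coefB !(coef_pol _ _ _ hi).
case: i hi => [|i] hi /=; first by rewrite !expr0; ring.
rewrite coef_pol; last exact: ltnW.
rewrite expr1n exprS -signr_odd.
by case: (odd i) => /=; rewrite ?expr0 ?expr1; field; rewrite fact_neq0.
Qed.

Lemma Yadd a b : Z N (Y a * Y b - Y (a + b)).
Proof.
move=> i hi; rewrite coefB coef_polM // coef_pol // (addrC a b) exprDn.
rewrite mulr_suml; apply/eqP; rewrite subr_eq0; apply/eqP.
apply: eq_bigr => j _.
have hj : (j <= i)%N by exact: ltnSE (ltn_ord j).
have hf := bin_fact hj.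
have -> : (i`!%:R : rat) = ('C(i, j) * (j`! * (i - j)`!))%:R by rewrite hf.
rewrite !natrM mulr_natr.
have hC : ('C(i, j)%:R : rat) != 0 by rewrite pnatr_eq0 -lt0n bin_gt0.
have h1 := fact_neq0 j; have h2 := fact_neq0 (i - j).
rewrite -mulr_natr; field.
by rewrite hC h1 h2.
Qed.

Lemma r6 : Z N (Y 1 * Y (-1) - 1).
Proof.
move=> i hi; have := Yadd 1 (-1) i hi; rewrite !coefB coef_pol // subrr expr0n coef1.
by case: eqP => [->|]; rewrite /= ?fact0 ?invr1 ?mulr1 ?mul0r.
Qed.

Lemma r7 : Z N (Y 1 * Y 1 - Y 2).
Proof. exact: Yadd 1 1. Qed.

End Part2.

Section Part2b.
Variable B : nat -> rat.
Hypothesis HB : bernoulli_gf B.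
Variable N : nat.

Lemma part2Z : Z N ((2 * Bp B N - B2 B N) * (2 * ('X * Sp N)) - 2 * 'X).
Proof.
set D := 2 * Bp B N - B2 B N.
set Y1 := Y N 1; set Ym := Y N (-1); set Y2 := Y N 2.
set R1 := Bp B N * Ep N - 1.
set R2 := B2 B N * E2 N - 2.
set R3 := 'X * Ep N - (Y1 - 1).
set R4 := 'X * E2 N - (Y2 - 1).
set R5 := 2 * ('X * Sp N) - (Y1 - Ym).
set R6 := Y1 * Ym - 1.
set R7 := Y1 * Y1 - Y2.
set G := D * (2 * ('X * Sp N)) - 2 * 'X.
have e : G = - (G * R6) + Ym * (Y1 * D * R5 + D * R7 - D * R6
   + (2 * 'X * (Y1 + 1)) * R1 - (2 * Bp B N * (Y1 + 1)) * R3 - (2 * Bp B N) * R7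
   - 'X * R2 + B2 B N * R4).
  rewrite /G /R1 /R2 /R3 /R4 /R5 /R6 /R7 /D; ring.
rewrite e; apply: ZD; first by apply: ZN; apply: ZM; exact: r6.
apply: ZM.
repeat (apply: ZD || apply: ZB).
all: try apply: ZN.
all: try (apply: ZM; first [exact: (r1 _ HB) | exact: (r2 _ HB) | exact: r3 | exact: r4 | exact: r5 | exact: r6 | exact: r7]).
Qed.

End Part2b.

Lemma part2 (B : nat -> rat) (HB : bernoulli_gf B) (n : nat) :
  Z n.+1 ((2 * Bp B n.+2 - B2 B n.+2) * Sp n.+2 - 1).
Proof.
move=> i hi; have := @part2Z B HB n.+2 i.+1 hi.
set D := 2 * Bp B n.+2 - B2 B n.+2.
have -> : D * (2 * ('X * Sp n.+2)) = 2 * ('X * (D * Sp n.+2)) by ring.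
rewrite coefB !coef_natM coefXM coefX /= coefB coef1 => /eqP.
rewrite -mulrBr mulf_eq0 => /orP [|/eqP //].
by rewrite pnatr_eq0.
Qed.

Lemma coefD2 (B : nat -> rat) N j : (j < N)%N ->
  (2 * Bp B N - B2 B N)`_j = (2 - 2 ^+ j) * (B j / (j`!)%:R).
Proof.
by move=> hj; rewrite coefB coef_natM /Bp /B2 !coef_pol // mulrBl.
Qed.

Definition cq (q : nat) : rat := (((q.+1.*2).+1)`!%:R)^-1.
Definition PP (m : nat) : {poly rat} := \sum_(q < m) cq q *: 'X^(q.+1.*2).
Definition QQ (m : nat) : {poly rat} := \sum_(K < m.+1) (- PP m) ^+ K.

Lemma coefPK m K k : (PP m ^+ K)`_k =
  \sum_(f : {ffun 'I_K -> 'I_m} | (\sum_(i < K) (f i).+1.*2)%N == k)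
     \prod_(i < K) cq (f i).
Proof.
rewrite -[K in LHS]card_ord -prodr_const /PP bigA_distr_bigA coef_sum [RHS]big_mkcond.
apply: eq_bigr => f _.
rewrite (eq_bigr (fun i => (cq (f i))%:P * 'X^((f i).+1.*2))); last first.
  by move=> i _; rewrite mul_polyC.
rewrite big_split /= -rmorph_prod prodrXr coefCM coefXn eq_sym.
by case: eqP; rewrite ?mulr1 ?mulr0.
Qed.

Lemma tele (R : comPzRingType) (x : R) M :
  (\sum_(K < M) x ^+ K) * (1 - x) = 1 - x ^+ M.
Proof.
elim: M => [|M IH]; first by rewrite big_ord0 mul0r expr0 subrr.
by rewrite big_ord_recr /= mulrDl IH exprS; ring.
Qed.

Lemma PP_X2 m : PP m = 'X^2 * \sum_(q < m) cq q *: 'X^(q.*2).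
Proof.
rewrite /PP mulr_sumr; apply: eq_bigr => q _.
by rewrite -scalerAr -exprD doubleS.
Qed.

Lemma Z_Ppow n : Z n.+1 ((- PP n./2) ^+ (n./2).+1).
Proof.
move=> i hi.
rewrite PP_X2 -mulrN exprMn -exprM coefXnM.
have h := odd_double_half n.
have -> : (i < 2 * (n./2).+1)%N by move: hi h; case: (odd n) => /=; lia.
by [].
Qed.

Lemma Z_SpP n : Z n.+1 (Sp n.+2 - (1 + PP n./2)).
Proof.
move=> i hi.
rewrite coefB coefD coef1 /PP coef_sum coef_pol; last by lia.
under eq_bigr => q _ do rewrite coefZ coefXn.
have h := odd_double_half i.
have hn := odd_double_half n.
case hodd: (odd i).
  rewrite big1 /=; last first.
    move=> q _; have -> : (i == q.+1.*2) = false.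
      by apply/negbTE/eqP => e; move: hodd; rewrite e odd_double.
    by rewrite mulr0.
  have -> : (i == 0%N) = false by apply/negbTE/eqP => e; move: hodd; rewrite e.
  by rewrite mul0r subrr.
move: h; rewrite hodd /= add0n.
case e2: (i./2) => [|r] hi2.
  rewrite -hi2 /= big1 ?fact0 ?addr0 ?invr1 ?mulr1 ?subrr //.
  by move=> q _; rewrite mulr0.
have hr : (r < n./2)%N.
  move: hi hn hi2; case: (odd n) => /=; lia.
rewrite (bigD1 (Ordinal hr)) //= big1; last first.
  move=> q hq; have -> : (i == q.+1.*2) = false.
    apply/negbTE/eqP => e; move/eqP: hq; apply; apply: val_inj => /=.
    move: e hi2; lia.
  by rewrite mulr0.
have -> : (i == 0%N) = false by apply/negbTE/eqP; lia.
rewrite -hi2 eqxx /cq /= mulr1 addr0 add0r mul1r subrr.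
by [].
Qed.

Lemma Z_QD (B : nat -> rat) (HB : bernoulli_gf B) n :
  Z n.+1 (QQ n./2 - (2 * Bp B n.+2 - B2 B n.+2)).
Proof.
set D := 2 * Bp B n.+2 - B2 B n.+2.
set Q := QQ n./2; set P := PP n./2; set S := Sp n.+2.
have hQ : Q * (1 + P) = 1 - (- P) ^+ (n./2).+1.
  by rewrite -tele /Q /QQ opprK.
have e1 : Q * S - 1 = - ((- P) ^+ (n./2).+1) + Q * (S - (1 + P)).
  by rewrite mulrBr hQ; ring.
have Z1 : Z n.+1 (Q * S - 1).
  by rewrite e1; apply: ZD; [apply: ZN; exact: Z_Ppow | apply: ZM; exact: Z_SpP].
have e2 : Q - D = - (Q * (D * S - 1)) + D * (Q * S - 1) by ring.
rewrite e2; apply: ZD; first by apply: ZN; apply: ZM; exact: part2.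
by apply: ZM.
Qed.

Lemma termE n K (q : {ffun 'I_K -> 'I_(n./2)}) :
  ((\prod_(i < K) ((q i).+1.*2.+1)%:R)^-1 *
         ((n`!)%:R / (\prod_(i < K) ((q i).+1.*2)`!)%:R))
  = (n`!)%:R * \prod_(i < K) cq (q i).
Proof.
rewrite natr_prod -!prodfV.
have -> : \prod_(i < K) cq (q i) =
   \prod_(i < K) ((((q i).+1.*2.+1)%:R)^-1 * ((((q i).+1.*2)`!)%:R)^-1).
  by apply: eq_bigr => i _; rewrite /cq factS natrM invfM.
rewrite big_split /=; ring.
Qed.

Theorem mainTheorem4 (B : nat -> rat) (HB : bernoulli_gf B) (n : nat) :
  n != 1%N ->
  B n = (2 - 2 ^+ n)^-1 *
    \sum_(K < (n./2).+1)
      (-1) ^+ K *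
      \sum_(q : {ffun 'I_K -> 'I_(n./2)} | (\sum_(i < K) (q i).+1.*2)%N == n)
        ((\prod_(i < K) ((q i).+1.*2.+1)%:R)^-1 *
         ((n`!)%:R / (\prod_(i < K) ((q i).+1.*2)`!)%:R)).
Proof.
move=> hn1.
under eq_bigr => K _ do under eq_bigr => q _ do rewrite termE.
under eq_bigr => K _ do rewrite -mulr_sumr -coefPK.
have hQ : (QQ n./2)`_n = \sum_(K < (n./2).+1) (-1) ^+ K * (PP n./2 ^+ K)`_n.
  rewrite /QQ coef_sum; apply: eq_bigr => K _.
  rewrite (exprNn (PP n./2)).
  have -> : ((-1) ^+ K : {poly rat}) = ((-1) ^+ K)%:P.
    by rewrite rmorphXn /= polyCN polyC1.
  by rewrite coefCM.
have hQD := @Z_QD B HB n n (ltnSn n).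
move: hQD; rewrite coefB => /eqP; rewrite subr_eq0 => /eqP.
rewrite hQ coefD2 // => e.
rewrite (eq_bigr (fun K : 'I_(n./2).+1 => n`!%:R * ((-1) ^+ K * (PP n./2 ^+ K)`_n))); last first.
  by move=> K _; ring.
rewrite -mulr_sumr e.
have h2 : (2 - 2 ^+ n : rat) != 0.
  rewrite subr_eq0 -natrX (_ : (2 : rat) = 2%:R) // eqr_nat.
  rewrite -{1}(expn1 2) eqn_exp2l // eq_sym; exact: hn1.
have hf := fact_neq0 n.
by field; rewrite h2 hf.
Qed.
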